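(* Let $M$ be a generalized modularity matrix on $V$ such that $M\mathbb{1}=0$, with induced modularity function $Q$. Let $\{S_1,\dots,S_p\}$ be a partition of $V$ into pairwise disjoint nonempty subsets such that $Q(S_i)>0$ for all $i$ and $Q(S_i,S_j)<0$ for all $i\ne j$. Then $M$ has at least $p-1$ positive eigenvalues (counted with multiplicity).
   Context: Let $V=\{1,\dots,n\}$ and let $A\in\mathbb{R}^{n\times n}$ be the adjacency matrix of an undirected connected weighted graph on $V$, possibly with loops, i.e. $A$ is symmetric, entrywise nonnegative and irreducible. A generalized modularity matrix is any matrix $M=A+\Delta-\sigma vv^{\mathsf T}$ where $\Delta$ is a real diagonal matrix, $v\ne0$ is entrywise nonnegative, and $\sigma>0$. $\mathbb{1}$ is the all-ones vector and $\mathbb{1}_S$ the characteristic vector of $S\subseteq V$; $Q(S)=\mathbb{1}_S^{\mathsf T}M\mathbb{1}_S$, and for disjoint $S,T$, $Q(S,T)=\mathbb{1}_S^{\mathsf T}M\mathbb{1}_T$. *)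

(* Defs.v *)
From HB Require Import structures.
From mathcomp Require Import all_boot all_order all_algebra.
Set Implicit Arguments. Unset Strict Implicit. Unset Printing Implicit Defensive.
Import Order.TTheory GRing.Theory Num.Theory.
Local Open Scope ring_scope.

(* A is the adjacency matrix of an undirected connected weighted graph
   (possibly with loops): symmetric, entrywise nonnegative, irreducible
   (= the graph with edges {i,j : A i j <> 0} is connected). *)
Definition is_adjacency (R : numDomainType) (n : nat) (A : 'M[R]_n) : Prop :=
  [/\ A^T = A,
      (forall i j, 0 <= A i j) &
      (forall i j, connect (fun a b : 'I_n => A a b != 0) i j)].

Definition gen_modularity (R : numDomainType) (n : nat)
    (A : 'M[R]_n) (d : 'rV[R]_n) (sigma : R) (v : 'cV[R]_n) : 'M[R]_n :=
  A + diag_mx d - sigma *: (v *m v^T).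

Definition charvec (R : numDomainType) (n : nat) (S : {set 'I_n}) : 'cV[R]_n :=
  \col_i (if i \in S then 1 else 0).

Definition Qmod (R : numDomainType) (n : nat) (M : 'M[R]_n) (S : {set 'I_n}) : R :=
  ((charvec R S)^T *m M *m charvec R S) 0 0.

Definition Qmod2 (R : numDomainType) (n : nat) (M : 'M[R]_n)
    (S T : {set 'I_n}) : R :=
  ((charvec R S)^T *m M *m charvec R T) 0 0.

(* M has at least k positive eigenvalues counted with (algebraic) multiplicity:
   there are k positive reals x_1..x_k (repetitions allowed) such that
   prod (X - x_i) divides the characteristic polynomial of M. *)
Definition at_least_pos_eigs (R : numFieldType) (n : nat) (M : 'M[R]_n)
    (k : nat) : Prop :=
  exists s : seq R, [/\ size s = k, all (fun x => 0 < x) s &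
     (\prod_(x <- s) ('X - x%:P)) %| char_poly M].

(* Main.v *)
Require Import Defs.
From HB Require Import structures.
From mathcomp Require Import all_boot all_order all_algebra spectral.
From mathcomp Require Import complex ring.
Import Order.TTheory GRing.Theory Num.Theory.
Local Open Scope ring_scope.

Section QP.
Variable C : numClosedFieldType.

Lemma quad_pos q (G : 'M[C]_q) (c : 'rV[C]_q) :
  G^T = G -> (forall i j, i != j -> G i j <= 0) ->
  (forall i, 0 < \sum_j G i j) -> c != 0 ->
  0 < (c *m G *m (map_mx Num.conj c^T)) 0 0.
Proof.
move=> Gs Gneg Gpos cn0.
set a := fun i => c 0 i.
have GS i j : G i j = G j i by rewrite -{1}Gs mxE.
have -> : (c *m G *m (map_mx Num.conj c^T)) 0 0
    = \sum_i \sum_j G i j * (a i * (a j)^*).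
  rewrite mxE exchange_big; apply: eq_bigr => j _; rewrite !mxE mulr_suml.
  by apply: eq_bigr => i _; rewrite /a; ring.
set T := \sum_i _.
set r := fun i => \sum_j G i j.
have e2 : T *+ 2 = (\sum_i r i * (a i * (a i)^*)) *+ 2
     + \sum_i \sum_j (- G i j) * ((a i - a j) * (a i - a j)^*).
  have A1 : \sum_i \sum_j G i j * (a i * (a i)^*) = \sum_i r i * (a i * (a i)^*).
    by apply: eq_bigr => i _; rewrite mulr_suml.
  have A2 : \sum_i \sum_j G i j * (a j * (a j)^*) = \sum_i r i * (a i * (a i)^*).
    rewrite exchange_big; apply: eq_bigr => i _; rewrite /r mulr_suml.
    by apply: eq_bigr => j _; rewrite GS.
  have A4 : \sum_i \sum_j G i j * (a j * (a i)^*) = T.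
    rewrite exchange_big; apply: eq_bigr => i _; apply: eq_bigr => j _.
    by rewrite GS.
  have -> : \sum_i \sum_j (- G i j) * ((a i - a j) * (a i - a j)^*)
     = \sum_i \sum_j (G i j * (a i * (a j)^*) + G i j * (a j * (a i)^*)
          - G i j * (a i * (a i)^*) - G i j * (a j * (a j)^*)).
    apply: eq_bigr => i _; apply: eq_bigr => j _.
    rewrite rmorphB /=; ring.
  have -> : \sum_i \sum_j (G i j * (a i * (a j)^*) + G i j * (a j * (a i)^*)
          - G i j * (a i * (a i)^*) - G i j * (a j * (a j)^*))
     = \sum_i (\sum_j (G i j * (a i * (a j)^*)) + \sum_j (G i j * (a j * (a i)^*))
          - \sum_j (G i j * (a i * (a i)^*)) - \sum_j (G i j * (a j * (a j)^*))).
    by apply: eq_bigr => i _; rewrite !sumrB big_split.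
  rewrite !sumrB big_split /= A1 A2 A4 -/T; ring.
have : 0 < T *+ 2.
  rewrite e2; apply: ltr_wpDr.
    apply: sumr_ge0 => i _; apply: sumr_ge0 => j _.
    have [->|ij] := eqVneq i j; first by rewrite subrr rmorph0 !mulr0.
    by apply: mulr_ge0; [rewrite oppr_ge0; exact: Gneg | exact: mul_conjC_ge0].
  rewrite pmulrn_lgt0 //.
  have [i0 ai0] : exists i, a i != 0.
    apply/existsP; move: cn0; apply: contraR; rewrite negb_exists => /forallP H.
    by apply/eqP/rowP => i; rewrite mxE; move: (H i); rewrite negbK => /eqP.
  rewrite (bigD1 i0) //=; apply: ltr_pwDl.
    by apply: mulr_gt0; [exact: Gpos | rewrite mul_conjC_gt0].
  apply: sumr_ge0 => i _; apply: mulr_ge0; first exact: ltW (Gpos i).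
  exact: mul_conjC_ge0.
by rewrite pmulrn_lgt0.
Qed.
End QP.
Lemma char_poly_similar (F : fieldType) n (P B : 'M[F]_n) :
  P \in unitmx -> char_poly (invmx P *m B *m P) = char_poly B.
Proof.
move=> Pu; rewrite /char_poly /char_poly_mx.
set Pc := map_mx polyC P.
have Pcu : Pc \in unitmx by rewrite map_unitmx.
have -> : map_mx polyC (invmx P *m B *m P) = invmx Pc *m map_mx polyC B *m Pc.
  by rewrite !map_mxM map_invmx.
have -> : 'X%:M - invmx Pc *m map_mx polyC B *m Pc
    = invmx Pc *m ('X%:M - map_mx polyC B) *m Pc.
  by rewrite mulmxBr mulmxBl mul_mx_scalar -scalemxAl mulVmx // scalemx1.
rewrite !det_mulmx det_inv mulrAC mulVr ?mul1r //.
Qed.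

Section QN.
Variable C : numClosedFieldType.
Local Open Scope sesquilinear_scope.

Lemma trC_mul m k l (A : 'M[C]_(m, k)) (B : 'M[C]_(k, l)) :
  (A *m B) ^t* = B ^t* *m A ^t*.
Proof. by rewrite trmx_mul map_mxM. Qed.

Lemma quad_nonpos n k (P : 'M[C]_n) (D : 'rV[C]_n) (f : 'I_k -> 'I_n)
   (u : 'rV[C]_k) :
  P \is unitarymx -> (forall a, D 0 (f a) <= 0) ->
  ((u *m rowsub f P) *m (invmx P *m diag_mx D *m P) *m (u *m rowsub f P)^t*) 0 0 <= 0.
Proof.
move=> Pu Dn.
have PP := unitarymxP Pu.
rewrite invmx_unitary // rowsubE mulmxA.
set w := u *m rowsub f 1%:M.
rewrite trC_mul !mulmxA -[w *m P *m _]mulmxA PP mulmx1 -[_ *m P *m P ^t*]mulmxA PP mulmx1.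
rewrite mul_mx_diag mxE; apply: sumr_le0 => l _.
rewrite !mxE.
have [Dl|Dl] := boolP (D 0 l <= 0).
  by rewrite mulrAC; apply: mulr_ge0_le0 => //; exact: mul_conjC_ge0.
suff -> : \sum_j u 0 j * rowsub f 1%:M j l = 0 by rewrite !mul0r.
apply: big1 => a _; rewrite !mxE.
have [e|] := eqVneq (f a) l; last by move=> _; rewrite mulr0.
by rewrite -e Dn in Dl.
Qed.

Lemma rowsub_unitary n k (P : 'M[C]_n) (f : 'I_k -> 'I_n) :
  P \is unitarymx -> injective f -> rowsub f P \is unitarymx.
Proof.
move=> /row_unitarymxP Pu finj; apply/row_unitarymxP => i j.
by rewrite !row_rowsub Pu (inj_eq finj).
Qed.
End QN.

Arguments quad_pos {C q G c}.
Arguments quad_nonpos {C n k P D f}.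
Arguments rowsub_unitary {C n k P f}.
Arguments trC_mul {C m k l}.

Section Emb.
Variable R : rcfType.
Local Notation emb := (real_complex R).
Lemma conj_emb (x : R) : (emb x)^* = emb x.
Proof. exact: conjc_real. Qed.
Lemma emb_le0 (x : R) : (emb x <= 0) = (x <= 0).
Proof. exact: lecR. Qed.
Lemma emb_gt0 (x : R) : (0 < emb x) = (0 < x).
Proof. exact: ltcR. Qed.
Lemma emb_real (x : R) : emb x \is Num.real.
Proof. by apply/complex_realP; exists x. Qed.
End Emb.

Theorem mainTheorem11 (R : rcfType) (n p : nat)
    (A : 'M[R]_n) (d : 'rV[R]_n) (sigma : R) (v : 'cV[R]_n)
    (S : 'I_p -> {set 'I_n}) :
  is_adjacency A ->
  (forall i, 0 <= v i 0) -> v != 0 -> 0 < sigma ->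
  let M := gen_modularity A d sigma v in
  M *m (const_mx 1 : 'cV[R]_n) = 0 ->
  (forall i, S i != set0) ->
  (forall i j, i != j -> [disjoint S i & S j]) ->
  \bigcup_(i < p) S i = [set: 'I_n] ->
  (forall i, 0 < Qmod M (S i)) ->
  (forall i j, i != j -> Qmod2 M (S i) (S j) < 0) ->
  at_least_pos_eigs M p.-1.
Proof.
move=> [At _ _] _ _ _ M M1 _ Sdisj Scov _ Sneg.
case: p S Sdisj Scov Sneg => [|q] S Sdisj Scov Sneg.
  by exists [::]; rewrite big_nil dvd1p.
rewrite /=.
have Msym : M^T = M.
  by rewrite /M /gen_modularity linearB linearD /= tr_diag_mx linearZ /= trmx_mul trmxK At.
pose emb := real_complex R.
pose Mc := map_mx emb M.
have Mherm : Mc \is hermsymmx.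
  apply: realsym_hermsym.
    apply/is_hermitianmxP; rewrite expr0 scale1r map_mx_id // map_trmx Msym //.
  by apply/mxOverP => i j; rewrite mxE; exact: emb_real.
pose P := spectralmx Mc; pose D := spectral_diag Mc.
have McE : Mc = invmx P *m diag_mx D *m P.
  exact/orthomx_spectralP/hermitian_normalmx.
have Dreal : forall i, D 0 i \is Num.real.
  by move=> i; apply: (mxOverP (hermitian_spectral_diag_real Mherm)).
have Pu : P \is unitarymx by exact: spectral_unitarymx.
pose N := [set l | ~~ (0 < D 0 l)].
have key : (q + #|N| <= n)%N.
  pose w := widen_ord (leqnSn q).
  pose Xr : 'M[R]_(q, n) := \matrix_(i, j) (if j \in S (w i) then 1 else 0).
  pose X := map_mx emb Xr.
  pose f := fun a : 'I_#|N| => enum_val a.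
  have finj : injective f by move=> a b; exact: enum_val_inj.
  pose Y := rowsub f P.
  pose Gr := Xr *m M *m Xr^T.
  have GrE i j : Gr i j = Qmod2 M (S (w i)) (S (w j)).
    rewrite /Qmod2 /charvec !mxE; apply: eq_bigr => k _; rewrite !mxE; congr (_ * _).
    by apply: eq_bigr => l _; rewrite !mxE.
  have sumcv : \sum_(j < q.+1) charvec R (S j) = const_mx 1.
    apply/colP => k; rewrite summxE !mxE.
    have : k \in \bigcup_(j < q.+1) S j by rewrite Scov inE.
    case/bigcupP => j0 _ kj0.
    rewrite (bigD1 j0) //= mxE kj0 big1 ?addr0 // => j jj0; rewrite mxE.
    by rewrite (disjointFr (Sdisj j0 j _) kj0) // eq_sym.
  have sumQ i : \sum_(j < q.+1) Qmod2 M (S i) (S j) = 0.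
    rewrite /Qmod2 -summxE -mulmx_sumr sumcv -mulmxA M1 mulmx0 mxE //.
  have XtE : (X ^t* )%sesqui = map_mx emb Xr^T.
    by apply/matrixP => i j; rewrite !mxE conj_emb.
  pose G := X *m Mc *m (X ^t* )%sesqui.
  have GE : G = map_mx emb Gr by rewrite /G XtE !map_mxM.
  have Gsym : G^T = G.
    by rewrite GE map_trmx /Gr !trmx_mul trmxK Msym mulmxA.
  have Gneg i j : i != j -> G i j <= 0.
    move=> ij; rewrite GE mxE emb_le0 GrE; apply: ltW; apply: Sneg.
    by apply: contra ij => /eqP/(congr1 val) /= /val_inj ->.
  have Gpos i : 0 < \sum_j G i j.
    rewrite GE (eq_bigr (fun j => emb (Gr i j))); last by move=> j _; rewrite mxE.
    rewrite -rmorph_sum emb_gt0.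
    have := sumQ (w i); rewrite big_ord_recr /= => /eqP; rewrite addr_eq0 => /eqP.
    rewrite (eq_bigr (fun j => Gr i j)); last by move=> j _; rewrite GrE.
    move=> ->; rewrite oppr_gt0; apply: Sneg.
    by rewrite -val_eqE /= neq_ltn ltn_ord.
  have keyc (c : 'rV_q) (u : 'rV_#|N|) : c *m X = u *m Y -> c = 0.
    move=> e; apply/eqP; apply/negPn/negP => cn0.
    have h1 := quad_pos Gsym Gneg Gpos cn0.
    have Dn a : D 0 (f a) <= 0.
      have := enum_valP a; rewrite inE => H.
      by rewrite real_leNgt ?real0 ?Dreal.
    have h2 := quad_nonpos u Pu Dn.
    rewrite -/Y -e -McE trC_mul !mulmxA in h2.
    rewrite /G !mulmxA in h1.
    by move: h2; rewrite (lt_geF h1).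
  have rX : \rank X = q.
    have k0 : kermx X = 0.
      apply/row_matrixP => r; rewrite row0; apply: (keyc _ 0).
      by rewrite mul0mx -row_mul mulmx_ker row0.
    have := mxrank_ker X; rewrite k0 mxrank0 => /esym/eqP; rewrite subn_eq0 => h.
    by apply/eqP; rewrite eqn_leq h rank_leq_row.
  have rY : \rank Y = #|N| by apply: mxrank_unitary; exact: rowsub_unitary.
  have cap0 : (X :&: Y)%MS = 0.
    apply/eqP; rewrite -submx0; apply/row_subP => r.
    have hx : (row r (X :&: Y) <= X)%MS by apply: submx_trans (row_sub _ _) (capmxSl _ _).
    have hy : (row r (X :&: Y) <= Y)%MS by apply: submx_trans (row_sub _ _) (capmxSr _ _).
    case/submxP: hx => c ec; case/submxP: hy => u eu.
    by rewrite submx0 ec (keyc c u) ?mul0mx // -ec -eu.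
  by rewrite -rX -rY -mxrank_disjoint_sum // rank_leq_col.
pose s := [seq complex.Re (D 0 i) | i <- enum (~: N)].
have Dpos i : i \in ~: N -> 0 < D 0 i.
  by rewrite !inE negbK.
have ReE i : i \in ~: N -> emb (complex.Re (D 0 i)) = D 0 i.
  by move=> iN; rewrite /emb RRe_real // Dreal.
have sz : (q <= size s)%N.
  rewrite size_map -cardE.
  have := cardsC N; rewrite card_ord => h.
  by rewrite -(leq_add2r #|N|) [X in (_ <= X)%N]addnC h.
have spos : all (fun x => 0 < x) s.
  apply/allP => x xs; case/mapP: xs => i; rewrite mem_enum => iN ->.
  by rewrite -emb_gt0 -/emb ReE // Dpos.
exists (take q s); split.
- exact: size_takel.
- by apply/allP => x /mem_take xs; exact: (allP spos).
apply: (@dvdp_trans _ (\prod_(x <- s) ('X - x%:P))).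
  by rewrite -{2}(cat_take_drop q s) big_cat /= dvdp_mulIl.
rewrite -(dvdp_map emb) map_prod_XsubC map_char_poly -/Mc McE.
rewrite char_poly_similar; last exact: unitarymx_unit.
rewrite char_poly_trig ?diag_mx_is_trig // (bigID (fun i => i \in ~: N)) /=.
apply: dvdp_mulr; rewrite big_map big_enum /=.
rewrite (eq_bigr (fun i => 'X - (diag_mx D i i)%:P)) //.
by move=> i iN; rewrite -/emb ReE // mxE eqxx mulr1n.
Qed.
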